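(* Let $F=(F_1,\ldots,F_{\ell})$ be an $m$-suitable rooted forest-tuple with $m>e(F)$. Let $B$ be a complete graph on $m+v(F)-e(F)$ vertices, all edges free, and fix an injective assignment of the roots of $F$ to vertices of $B$. Then, playing the Waiter-Client game on $B$, Waiter can force a red copy $\bar F=\bar F_1 \cup \cdots \cup \bar F_{\ell}$ of $F_1 \cup \cdots \cup F_{\ell}$ (with $\bar F_i$ the copy of $F_i$) within $e(F)$ rounds such that: (a) every root is mapped to its assigned vertex; (b) no edge between two images of roots is colored; (c) for every $i\in[\ell]$ there are no blue edges with both endpoints in $V(\bar F_i)$; (d) for every $i\in[\ell]$ there are no red edges with both endpoints in $V(\bar F_i)$ other than the edges of $\bar F_i$; (e) every colored edge intersects $V(\bar F)$; (f) every vertex not in $V(\bar F)$ is incident with at most one colored edge, and the other endpoint of such an edge is not a leaf of $\bar F$.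
   Context: A rooted forest is a forest each of whose components contains exactly one designated vertex, its root. A leaf is a vertex of degree 1 that is not a root. A rooted forest-tuple is a tuple $F=(F_1,\ldots,F_\ell)$ of pairwise vertex-disjoint rooted forests with $e(F_i)>0$ for some $i$; $v(F)$ and $e(F)$ are the total numbers of vertices and edges. Define $a(F)=\max_i e(F_i)$, $k(F)=|\{i: e(F_i)=a(F)\}|$, $t(F)=|\{i: e(F_i)>0\}|$. $F$ is suitable if $3a(F)+k(F)-e(F)\le 2$, or if $a(F)=1$ and $t(F)\ge 4$. A rooted forest-tuple $F=(F_1,\dots,F_\ell)$ is a valid subforest of a rooted forest-tuple $G=(G_1,\dots,G_{\ell''})$ if $\ell\le\ell''$, $F_i\subseteq G_i$ for every $i\in[\ell]$, and every root of $F_i$ is a root of $G_i$. $F$ is $m$-suitable if it is a valid subforest of some suitable rooted forest-tuple $G$ with $e(G)=m$. Waiter-Client game on $B$: in each round Waiter offers two free edges, Client colors one red and the other becomes blue. *)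

(* Defs.v *)
From mathcomp Require Import all_boot.
Set Implicit Arguments. Unset Strict Implicit. Unset Printing Implicit Defensive.

(* A rooted forest-tuple F = (F_1,...,F_ell) on the finite vertex type V:  *)
(* vertex x belongs to the forest F_(part x) (so the F_i are pairwise      *)
(* vertex-disjoint and V is the disjoint union of their vertex sets);      *)
Record rft (V : finType) := RFT {
  ell : nat;
  part : V -> 'I_ell;
  adj : rel V;
  rroots : {set V}
}.

Section Defs.
Variable V : finType.
Variable F : rft V.

Definition vset (i : 'I_(ell F)) : {set V} := [set x | part F x == i].

Definition edges : {set {set V}} :=
  [set e : {set V} | [exists x, exists y, adj F x y && (e == [set x; y])]].

Definition e_i (i : 'I_(ell F)) : nat := #|[set e in edges | e \subset vset i]|.

Definition eF : nat := #|edges|.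
Definition vF : nat := #|V|.

Definition aF : nat := \max_(i < ell F) e_i i.
Definition kF : nat := #|[set i : 'I_(ell F) | e_i i == aF]|.
Definition tF : nat := #|[set i : 'I_(ell F) | 0 < e_i i]|.

Definition has_cycle : Prop :=
  exists s : seq V, [/\ 2 < size s, uniq s & cycle (adj F) s].

Definition is_rft : Prop :=
  [/\ symmetric (adj F) /\ irreflexive (adj F),
      (forall x y, adj F x y -> part F x = part F y),
      ~ has_cycle,
      (forall x, #|[set r in rroots F | connect (adj F) x r]| = 1)
    & 0 < eF ].

Definition suitable : Prop :=
  3 * aF + kF <= eF + 2 \/ (aF = 1 /\ 4 <= tF).

Definition leaves : {set V} :=
  [set x | (#|[set y | adj F x y]| == 1) && (x \notin rroots F)].

End Defs.
Arguments vset {V} F i.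
Arguments e_i {V} F i.

(* F (on V) is a valid subforest of G (on W), the inclusion being realised by
   an injective vertex map f (F_i ⊆ G_i, ell F <= ell G, rroots to rroots). *)
Definition valid_sub (V W : finType) (F : rft V) (G : rft W) (f : V -> W) : Prop :=
  [/\ injective f, ell F <= ell G,
      (forall x, nat_of_ord (part G (f x)) = nat_of_ord (part F x)),
      (forall x y, adj F x y -> adj G (f x) (f y))
    & (forall x, x \in rroots F -> f x \in rroots G)].

Definition m_suitable (m : nat) (V : finType) (F : rft V) : Prop :=
  exists (W : finType) (G : rft W) (f : V -> W),
    [/\ is_rft G, suitable G, eF G = m & valid_sub F G f].

(* A position is (Red, Blue), sets of edges (2-subsets of 'I_N).           *)
Definition position (N : nat) := ({set {set 'I_N}} * {set {set 'I_N}})%type.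

Definition free_edge N (s : position N) (e : {set 'I_N}) : bool :=
  [&& #|e| == 2, e \notin s.1 & e \notin s.2].

Fixpoint waiter_forces N (P : position N -> Prop) (k : nat) (s : position N) : Prop :=
  P s \/
  match k with
  | 0 => False
  | k'.+1 => exists e1 e2 : {set 'I_N},
      [/\ free_edge s e1, free_edge s e2, e1 != e2,
          waiter_forces P k' (e1 |: s.1, e2 |: s.2)
        & waiter_forces P k' (e2 |: s.1, e1 |: s.2)]
  end.

Definition good_copy (V : finType) (F : rft V) N (rho : V -> 'I_N)
    (s : position N) : Prop :=
  let Red := s.1 in let Blue := s.2 in
  exists phi : V -> 'I_N,
  [/\ injective phi /\
      (forall x y, adj F x y -> [set phi x; phi y] \in Red),
      (forall x, x \in rroots F -> phi x = rho x) /\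
      (forall x y, x \in rroots F -> y \in rroots F -> x != y ->
                   [set phi x; phi y] \notin Red :|: Blue),
      (forall i e, e \in Blue -> ~~ (e \subset phi @: vset F i)) /\
      (forall i e, e \in Red -> e \subset phi @: vset F i ->
                   exists x y, [/\ adj F x y, part F x = i & e = [set phi x; phi y]]),
      (forall e, e \in Red :|: Blue -> ~~ [disjoint e & phi @: [set: V]])
    & (forall w, w \notin phi @: [set: V] ->
                   #|[set e in Red :|: Blue | w \in e]| <= 1 /\
                   (forall e u, e \in Red :|: Blue -> w \in e -> u \in e -> u != w ->
                      u \notin phi @: leaves F))].

(* Main.v *)
Require Import Defs.
From mathcomp Require Import all_boot zify.
Set Implicit Arguments. Unset Strict Implicit. Unset Printing Implicit Defensive.

Ltac uniq_tac := rewrite /= !inE !negb_or ?andbT; repeat (apply/andP; split); by [ | rewrite eq_sym].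

Section Num.
Variable n : nat.
Implicit Types (r : 'I_n -> nat) (b : nat).

Definition Good b r :=
  [/\ 0 < \sum_i r i -> \sum_i r i < b,
      forall p q, p != q -> 2 * r p + r q <= b
    & forall p, 2 * r p <= b].

Definition decr r i := fun x => r x - (x == i).

Lemma sum_sub r (s : seq 'I_n) : uniq s -> \sum_(x <- s) r x <= \sum_x r x.
Proof.
move=> Hs; apply: (uniq_sub_le_big (le:=leq)) => //.
- by move=> x y; exact: leq_addr.
- exact: index_enum_uniq.
- by move=> x _; rewrite mem_index_enum.
Qed.

Lemma sum2 r p q : p != q -> r p + r q <= \sum_x r x.
Proof.
move=> H; have := @sum_sub r [:: p; q]; rewrite !big_cons big_nil /= inE H addn0.
by apply.
Qed.

Lemma sum3 r p q t : uniq [:: p; q; t] -> r p + r q + r t <= \sum_x r x.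
Proof. by move=> H; have := @sum_sub r _ H; rewrite !big_cons big_nil addn0 addnA. Qed.

Lemma sum4 r p q t u : uniq [:: p; q; t; u] -> r p + r q + r t + r u <= \sum_x r x.
Proof. by move=> H; have := @sum_sub r _ H; rewrite !big_cons big_nil addn0 !addnA. Qed.

Lemma sum_decr r i : 0 < r i -> \sum_x decr r i x = (\sum_x r x).-1.
Proof.
move=> Hi; rewrite (bigD1 i) //= [in RHS](bigD1 i) //= /decr eqxx.
rewrite (eq_bigr (fun x => r x)); last by move=> x /negbTE ->; rewrite subn0.
lia.
Qed.

Lemma decr_le r i x : decr r i x <= r x.
Proof. exact: leq_subr. Qed.

Lemma decr_ne r i x : x != i -> decr r i x = r x.
Proof. by rewrite /decr => /negbTE ->; rewrite subn0. Qed.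

Lemma decr_eq r i : decr r i i = (r i).-1.
Proof. by rewrite /decr eqxx subn1. Qed.

Lemma good_M1 b r i : Good b r -> 0 < r i -> (forall x, x != i -> r x = 0) ->
  2 <= b /\ Good (b - 2) (decr r i).
Proof.
move=> [G1 G2 G3] Hi Ho.
have Hs : \sum_x r x = r i.
  rewrite (bigD1 i) //= big1 ?addn0 // => x; exact: Ho.
have := G3 i => H3.
split; first lia.
split.
- rewrite sum_decr // Hs => ?; lia.
- move=> p q Hpq; case: (eqVneq p i) => [Ep|Hp]; first subst p.
    have Hq : q != i by rewrite eq_sym. rewrite decr_eq (decr_ne _ Hq) (Ho _ Hq); lia.
  rewrite decr_ne // Ho //; case: (eqVneq q i) => [->|Hq].
    rewrite decr_eq; lia.
  rewrite decr_ne // Ho //; lia.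
- move=> p; case: (eqVneq p i) => [->|Hp]; first by rewrite decr_eq; lia.
  rewrite decr_ne // Ho //; lia.
Qed.

Lemma good_M2 b r c d : Good b r -> c != d -> 0 < r c -> 0 < r d ->
  (forall x, x != c -> x != d -> r x <= r c) ->
  (forall x, x != c -> x != d -> (r x < r c) \/ (r d <= r c)) ->
  1 <= b /\ Good (b - 1) (decr r c).
Proof.
move=> [G1 G2 G3] Hcd Hc Hd H1 H2.
have Hs := sum2 r Hcd.
have Hb : \sum_x r x < b by apply: G1; lia.
split; first lia.
split.
- rewrite sum_decr //; lia.
- move=> p q Hpq.
  case: (eqVneq p c) => [Ep|Hpc].
    subst p; rewrite decr_eq decr_ne 1?eq_sym //; have := G2 _ _ Hpq; lia.
  rewrite (decr_ne _ Hpc).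
  case: (eqVneq q c) => [Eq|Hqc].
    subst q; rewrite decr_eq; have := G2 _ _ Hpq; lia.
  rewrite (decr_ne _ Hqc).
  case: (eqVneq p d) => [Ep|Hpd].
    subst p.
    have Hq3 : uniq [:: c; d; q] by uniq_tac.
    have := sum3 r Hq3; have := G2 _ _ (Hqc : q != c); have := G2 d c; rewrite eq_sym Hcd => /(_ isT).
    case: (H2 q Hqc); [rewrite eq_sym; exact: Hpq| |]; lia.
  case: (eqVneq q d) => [Eq|Hqd].
    subst q.
    have Hq3 : uniq [:: c; d; p] by uniq_tac.
    have := sum3 r Hq3; have := H1 p Hpc Hpd; lia.
  have Hq4 : uniq [:: c; d; p; q] by uniq_tac.
  have := sum4 r Hq4; have := H1 p Hpc Hpd; lia.
- move=> p; case: (eqVneq p c) => [->|Hpc]; first by rewrite decr_eq; have := G3 c; lia.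
  rewrite decr_ne //; have := G2 _ _ Hpc; lia.
Qed.

Lemma good_M1M3 b r i c : Good b r -> c != i -> 0 < r c ->
  (forall x, x != i -> r x < r i) ->
  2 <= b /\ Good (b - 2) (decr (decr r i) c).
Proof.
move=> [G1 G2 G3] Hci Hc Hmax.
have Hi := Hmax _ Hci.
have Hs := sum2 r Hci.
have Hb : \sum_x r x < b by apply: G1; lia.
have := G3 i => H3.
have Dv : forall x, decr (decr r i) x x = 0 -> True by [].
have Dle : forall x, decr (decr r i) c x <= decr r i x by move=> x; exact: decr_le.
split; first lia.
split.
- rewrite sum_decr; last by rewrite decr_ne //; lia.
  rewrite sum_decr; last lia.
  lia.
- move=> p q Hpq.
  have Eq := Dle q; have Eq2 := decr_le r i q.
  case: (eqVneq p i) => [Ep|Hpi].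
    subst p; rewrite decr_ne 1?eq_sym // decr_eq; have := G2 _ _ Hpq; lia.
  have Ep := Dle p; rewrite (decr_ne _ Hpi) in Ep; have := Hmax _ Hpi.
  case: (eqVneq q i) => [Eqi|Hqi].
    subst q; have Hic : i != c by rewrite eq_sym.
    rewrite [decr (decr r i) c i](decr_ne _ Hic) decr_eq; have Hip : i != p by rewrite eq_sym.
    have := G2 _ _ Hip; lia.
  have Hiq : i != q by rewrite eq_sym.
  have := G2 _ _ Hiq; lia.
- move=> p; have Ep := Dle p; have [Epi|Hpi] := eqVneq p i.
    by rewrite Epi decr_eq in Ep *; lia.
  rewrite [decr r i p](decr_ne _ Hpi) in Ep; have := Hmax _ Hpi; lia.
Qed.

End Num.

Lemma Good_ext n b (r r' : 'I_n -> nat) : r =1 r' -> Good b r -> Good b r'.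
Proof.
move=> Er [G1 G2 G3]; have Es : \sum_i r i = \sum_i r' i by apply: eq_bigr => i _.
split; rewrite -?Es //; move=> *; rewrite -!Er; auto.
Qed.

Lemma Good_mono n b b' (r : 'I_n -> nat) : b <= b' -> Good b r -> Good b' r.
Proof.
move=> Hb [G1 G2 G3]; split.
- by move=> H; apply: leq_trans (G1 H) Hb.
- by move=> p q H; apply: leq_trans (G2 _ _ H) Hb.
- by move=> p; apply: leq_trans (G3 p) Hb.
Qed.

Set Implicit Arguments. Unset Strict Implicit. Unset Printing Implicit Defensive.

Section Forest.
Variable V : finType.
Variable F : rft V.
Hypothesis Hsym : symmetric (adj F).
Hypothesis Hirr : irreflexive (adj F).
Hypothesis Hnocyc : ~ has_cycle F.
Hypothesis Hroot : forall x, #|[set r in rroots F | connect (adj F) x r]| = 1.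
Hypothesis Hpart : forall x y, adj F x y -> part F x = part F y.

Local Notation A := (adj F).
Local Notation R := (rroots F).

Lemma exists_root x : exists2 r, r \in R & connect A x r.
Proof.
have : 0 < #|[set r in R | connect A x r]| by rewrite Hroot.
by case/card_gt0P => r; rewrite inE => /andP[h1 h2]; exists r.
Qed.

Lemma root_uniq x r1 r2 : r1 \in R -> r2 \in R -> connect A x r1 -> connect A x r2 -> r1 = r2.
Proof.
move=> h1 h2 c1 c2.
have := Hroot x; move/eqP/cards1P => [r Hr].
have : r1 \in [set r in R | connect A x r] by rewrite inE h1 c1.
have : r2 \in [set r in R | connect A x r] by rewrite inE h2 c2.
by rewrite Hr !inE => /eqP-> /eqP->.
Qed.

Definition reach n x := [exists p : n.-tuple V, path A x p && (last x p \in R)].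

Lemma reach_ex x : exists n, reach n x.
Proof.
have [r Hr /connectP [p Hp Hl]] := exists_root x.
exists (size p); apply/existsP; exists (in_tuple p) => /=.
by rewrite Hp -Hl Hr.
Qed.

Definition dist x := ex_minn (reach_ex x).

Lemma dist_reach x : reach (dist x) x.
Proof. by rewrite /dist; case: ex_minnP. Qed.

Lemma dist_min x n : reach n x -> dist x <= n.
Proof. by rewrite /dist; case: ex_minnP => k _ H /H. Qed.

Lemma dist0 x : (dist x == 0) = (x \in R).
Proof.
apply/idP/idP.
  move=> /eqP H; have := dist_reach x; rewrite H => /existsP [p /andP [_]].
  by rewrite tuple0.
move=> Hx; rewrite -leqn0; apply: dist_min; apply/existsP; exists [tuple].
by rewrite /= Hx.
Qed.

Lemma dist_adj x y : A x y -> dist x <= (dist y).+1.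
Proof.
move=> Hxy; apply: dist_min.
have /existsP [p /andP [Hp Hl]] := dist_reach y.
apply/existsP; exists [tuple of y :: p] => /=.
by rewrite Hxy Hp.
Qed.

Lemma dist_step x : x \notin R -> exists2 y, A x y & dist y = (dist x).-1.
Proof.
move=> Hx.
have : dist x != 0 by rewrite dist0.
have /existsP [p /andP [Hp Hl]] := dist_reach x.
case: p Hp Hl => [[|y s] //= Hs] Hp Hl Hd.
  by rewrite /= (negbTE Hx) in Hl.
move/andP: Hp => [Hxy Hp].
exists y => //.
have H1 : dist y <= (dist x).-1.
  apply: dist_min; apply/existsP.
  have Hsz : size s == (dist x).-1.
    move: Hs Hd => /= /eqP <- _; by rewrite /=.
  by exists (Tuple Hsz) => /=; rewrite Hp Hl.
have := dist_adj Hxy; lia.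
Qed.

Definition par x := odflt x [pick y | A x y && (dist y == (dist x).-1)].

Lemma par_spec x : x \notin R -> A x (par x) /\ dist (par x) = (dist x).-1.
Proof.
move=> Hx; rewrite /par; case: pickP => [y /andP [H1 /eqP H2] //|].
have [y H1 H2] := dist_step Hx.
by move/(_ y); rewrite H1 H2 eqxx.
Qed.

Lemma par_adj x : x \notin R -> A x (par x).
Proof. by case/par_spec. Qed.

Lemma par_lt x : x \notin R -> dist (par x) < dist x.
Proof.
move=> Hx; have [_ ->] := par_spec Hx.
have : dist x != 0 by rewrite dist0.
lia.
Qed.

Lemma par_part x : x \notin R -> part F (par x) = part F x.
Proof. by move=> Hx; rewrite (Hpart (par_adj Hx)). Qed.

Lemma chain_root (A' : rel V) : (forall u, u \notin R -> A' u (par u)) ->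
  forall u, exists2 r, r \in R & connect A' u r.
Proof.
move=> Hst u; move: {2}(dist u) (leqnn (dist u)) => n; elim: n u => [|n IH] u Hu.
  exists u; last exact: connect0.
  by rewrite -dist0; move: Hu; rewrite leqn0.
case: (boolP (u \in R)) => Hu'; first by exists u => //; exact: connect0.
have [r Hr Hc] : exists2 r, r \in R & connect A' (par u) r.
  apply: IH; have := par_lt Hu'; lia.
exists r => //; apply: connect_trans Hc; exact: connect1 (Hst _ Hu').
Qed.

Lemma par_edge x y : A x y ->
  ((x \notin R) && (par x == y)) || ((y \notin R) && (par y == x)).
Proof.
move=> Hxy; apply/negPn/negP; rewrite negb_or => /andP [Hn1 Hn2].
pose A' := [rel u v | A u v && ~~ (((u == x) && (v == y)) || ((u == y) && (v == x)))].
have Hst : forall u, u \notin R -> A' u (par u).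
  move=> u Hu; rewrite /= par_adj //=.
  apply/negP => /orP [] /andP [/eqP Eu /eqP Ep]; subst u.
    by move: Hn1; rewrite Hu Ep eqxx.
  by move: Hn2; rewrite Hu Ep eqxx.
have Asub : subrel A' A by move=> u v /andP [].
have A'sym : symmetric A'.
  move=> u v /=; rewrite Hsym; congr (_ && ~~ _).
  by case: (u == x); case: (v == y); case: (u == y); case: (v == x).
have Csub : subrel (connect A') (connect A).
  by apply: connect_sub => u v /Asub /connect1.
have [rx Hrx Cx] := @chain_root A' Hst x.
have [ry Hry Cy] := @chain_root A' Hst y.
have Erxy : rx = ry.
  apply: (root_uniq Hrx Hry).
    exact: Csub Cx.
  apply: connect_trans (connect1 Hxy) _.
  exact: Csub Cy.
subst ry.
have Cxy : connect A' x y.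
  apply: connect_trans Cx _.
  by rewrite (sym_connect_sym A'sym).
case/connectP: Cxy => p Hp Hl.
move: Hl; case: (shortenP Hp) => p' Hp' Hu _ Hl.
case: p' Hp' Hu Hl => [|z [|z2 p'']] Hp' Hu Hl.
- by move: Hxy; rewrite /= in Hl; rewrite -Hl Hirr.
- rewrite /= in Hl; subst z; move: Hp' => /= /andP [/andP [_]].
  by rewrite !eqxx.
- apply: Hnocyc; exists [:: x, z, z2 & p'']; split => //.
  rewrite /cycle rcons_path (sub_path Asub Hp') /=.
  by rewrite /= in Hl; rewrite -Hl Hsym.
Qed.


Lemma par_neq x : x \notin R -> par x != x.
Proof. by move=> Hx; apply/eqP => E; have := par_lt Hx; rewrite E ltnn. Qed.

Lemma pair_inj : {in [set x | x \notin R] &, injective (fun x => [set x; par x])}.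
Proof.
move=> x y; rewrite !inE => Hx Hy /= E.
have : x \in [set y; par y] by rewrite -E !inE eqxx.
have : y \in [set x; par x] by rewrite E !inE eqxx.
rewrite !inE => /orP [/eqP -> //|/eqP Ey] /orP [/eqP //|/eqP Ex].
have := par_lt Hx; have := par_lt Hy; rewrite -Ex -Ey; lia.
Qed.

Lemma edgesE : edges F = [set [set x; par x] | x in [set x | x \notin R]].
Proof.
apply/setP => e; rewrite inE; apply/existsP/imsetP.
  move=> [x /existsP [y /andP [Hxy /eqP ->]]].
  case/orP: (par_edge Hxy) => /andP [Hn /eqP Ep].
    by exists x; rewrite ?inE // Ep.
  by exists y; rewrite ?inE // Ep setUC.
move=> [x]; rewrite inE => Hx ->; exists x; apply/existsP; exists (par x).
by rewrite par_adj // eqxx.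
Qed.

Lemma eF_card : eF F = #|[set x | x \notin R]|.
Proof. by rewrite /eF edgesE card_in_imset //; exact: pair_inj. Qed.

Lemma ei_card i : e_i F i = #|[set x | (x \notin R) && (part F x == i)]|.
Proof.
rewrite /e_i.
have -> : [set e in edges F | e \subset vset F i] =
   [set [set x; par x] | x in [set x | (x \notin R) && (part F x == i)]].
  apply/setP => e; rewrite inE edgesE; apply/andP/imsetP.
    move=> [/imsetP [x]]; rewrite inE => Hx -> Hs; exists x => //.
    rewrite inE Hx /=.
    by move/subsetP: Hs => /(_ x); rewrite !inE eqxx => /(_ isT).
  move=> [x]; rewrite inE => /andP [Hx Hi] ->; split.
    by apply/imsetP; exists x; rewrite ?inE.
  apply/subsetP => z; rewrite !inE => /orP [] /eqP ->; rewrite ?par_part //.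
rewrite card_in_imset //.
move=> x y; rewrite !inE => /andP [Hx _] /andP [Hy _]; apply: pair_inj; by rewrite inE.
Qed.

Lemma par_not_leaf c : c \notin R -> par c \notin leaves F.
Proof.
move=> Hc; rewrite inE negb_and negbK.
case: (boolP (par c \in R)) => Hp; first by rewrite orbT.
rewrite orbF.
have H2 : [set par (par c); c] \subset [set y | adj F (par c) y].
  apply/subsetP => z; rewrite !inE => /orP [] /eqP ->; first exact: par_adj.
  by rewrite Hsym par_adj.
have Hne : par (par c) != c.
  apply/eqP => E; have := par_lt Hc; have := par_lt Hp; rewrite E; lia.
have := subset_leq_card H2; rewrite cards2 Hne.
by move=> H; apply/eqP => E; move: H; rewrite E.
Qed.

Variable N : nat.
Variable rho : V -> 'I_N.

Definition upd (phi : V -> 'I_N) x u := fun y => if y == x then u else phi y.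

Definition redset (E : {set V}) (phi : V -> 'I_N) :=
  [set [set phi x; phi (par x)] | x in E :\: R].

Definition cross (E : {set V}) (phi : V -> 'I_N) (e : {set 'I_N}) :=
  exists u v, [/\ u \in E, v \in E, part F u != part F v,
                 (u \notin R) || (v \notin R) & e = [set phi u; phi v]].

Definition dang (E : {set V}) (phi : V -> 'I_N) (e : {set 'I_N}) :=
  exists c w, [/\ c \in E, c \notin R, w \notin phi @: E & e = [set phi (par c); w]].

Record Inv (E : {set V}) (phi : V -> 'I_N) (s : position N) : Prop := {
  inv_R : R \subset E;
  inv_par : forall x, x \in E -> x \notin R -> par x \in E;
  inv_inj : {in E &, injective phi};
  inv_rho : forall x, x \in R -> phi x = rho x;
  inv_red : s.1 = redset E phi;
  inv_blue : forall e, e \in s.2 -> cross E phi e \/ dang E phi e;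
  inv_one : forall w, w \notin phi @: E -> #|[set e in s.2 | w \in e]| <= 1
}.

Definition Fresh (E : {set V}) (phi : V -> 'I_N) (s : position N) :=
  [set v | (v \notin phi @: E) && (v \notin cover (s.1 :|: s.2))].

Definition prof (E : {set V}) : 'I_(ell F) -> nat :=
  fun i => #|[set x | (x \notin E) && (part F x == i)]|.

Lemma upd_in phi x u y : y != x -> upd phi x u y = phi y.
Proof. by rewrite /upd => /negbTE ->. Qed.

Lemma upd_x phi x u : upd phi x u x = u.
Proof. by rewrite /upd eqxx. Qed.

Lemma in_Ene (E : {set V}) x y : y \in E -> x \notin E -> y != x.
Proof. by move=> Hy Hx; apply/eqP => E1; move: Hx; rewrite -E1 Hy. Qed.

Lemma img_upd (E : {set V}) phi x u : x \notin E -> upd phi x u @: (x |: E) = u |: phi @: E.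
Proof.
move=> Hx; rewrite imsetU1 upd_x; congr (_ |: _).
apply: eq_in_imset => y Hy; exact: upd_in (in_Ene Hy Hx).
Qed.


Lemma in_pair (T : finType) (a b : T) : a \in [set a; b] /\ b \in [set a; b].
Proof. by rewrite !inE !eqxx orbT. Qed.

Lemma embed (E : {set V}) phi (s : position N) x u bl :
  Inv E phi s -> x \notin E -> par x \in E -> u \notin phi @: E ->
  (forall e, e \in s.2 -> u \in e ->
     exists2 z, z \in E & (part F z != part F x) /\ e = [set phi z; u]) ->
  (cross (x |: E) (upd phi x u) bl \/ dang (x |: E) (upd phi x u) bl) ->
  (forall w, w \notin upd phi x u @: (x |: E) -> w \in bl -> forall e, e \in s.2 -> w \notin e) ->
  Inv (x |: E) (upd phi x u) ([set phi (par x); u] |: s.1, bl |: s.2).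
Proof.
move=> [IR Ipar Iinj Irho Ired Iblue Ione] Hx Hpx Hu Hue Hbl Hbl2.
have HxR : x \notin R by apply: contra Hx => /(subsetP IR).
have Hag : {in E, upd phi x u =1 phi} by move=> y Hy; exact: upd_in (in_Ene Hy Hx).
have Himg := img_upd phi u Hx.
split.
- by apply: subset_trans IR (subsetU1 _ _).
- move=> y; rewrite in_setU1 => /orP [/eqP ->|Hy] HyR; rewrite in_setU1 ?Hpx ?orbT //.
  by rewrite Ipar ?orbT.
- move=> y z; rewrite !in_setU1 => /orP [/eqP ->|Hy] /orP [/eqP ->|Hz] //.
  + rewrite upd_x (Hag _ Hz) => E1; move: Hu; rewrite E1.
    by rewrite (imset_f phi Hz).
  + rewrite upd_x (Hag _ Hy) => E1; move: Hu; rewrite -E1.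
    by rewrite (imset_f phi Hy).
  + by rewrite (Hag _ Hy) (Hag _ Hz) => /Iinj; apply.
- move=> y HyR; rewrite Hag ?Irho //; exact: (subsetP IR).
- rewrite /= Ired /redset.
  have -> : (x |: E) :\: R = x |: (E :\: R).
    by apply/setP => y; rewrite !inE; case: (eqVneq y x) => // ->; rewrite HxR.
  rewrite imsetU1 upd_x (Hag _ Hpx); congr (_ :|: _); first by rewrite setUC.
  apply: eq_in_imset => y; rewrite inE => /andP [HyR Hy].
  by rewrite (Hag _ Hy) (Hag _ (Ipar _ Hy HyR)).
- move=> e; rewrite in_setU1 => /orP [/eqP -> //|He].
  case: (Iblue _ He) => [[a [b [Ha Hb Hab HabR Ee]]]|[c [w [Hc HcR Hw Ee]]]].
    left; exists a, b; split; rewrite ?inE ?Ha ?Hb ?orbT //.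
    by rewrite (Hag _ Ha) (Hag _ Hb).
  case: (eqVneq w u) => [Ewu|Hwu].
    subst w; have [z Hz [Hzx Ez]] := Hue _ He (ltac:(by rewrite Ee !inE eqxx orbT)).
    left; exists z, x; split; rewrite ?inE ?Hz ?eqxx ?orbT //.
    by rewrite HxR orbT. by rewrite (Hag _ Hz) upd_x.
  right; exists c, w; split; rewrite ?inE ?Hc ?orbT //.
    by rewrite Himg in_setU1 negb_or Hwu Hw.
  by rewrite (Hag _ (Ipar _ Hc HcR)).
- move=> w Hw /=.
  have Hw' : w \notin phi @: E by move: Hw; rewrite Himg inE negb_or => /andP [].
  case: (boolP (w \in bl)) => Hwb.
    have -> : [set e in bl |: s.2 | w \in e] = [set bl].
      apply/setP => e; rewrite !inE; case: (eqVneq e bl) => [->|Hne] //=.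
      apply/negP => /andP [He Hwe]; by move: (Hbl2 _ Hw Hwb _ He); rewrite Hwe.
    by rewrite cards1.
  have -> : [set e in bl |: s.2 | w \in e] = [set e in s.2 | w \in e].
    apply/setP => e; rewrite !inE; case: (eqVneq e bl) => [->|Hne] //=.
    by rewrite (negbTE Hwb) andbF.
  exact: Ione.
Qed.

Lemma fresh_step (E : {set V}) phi (s : position N) x u bl :
  x \notin E -> par x \in E ->
  Fresh E phi s :\: (u |: bl) \subset
  Fresh (x |: E) (upd phi x u) ([set phi (par x); u] |: s.1, bl |: s.2).
Proof.
move=> Hx Hpx; apply/subsetP => v; rewrite !inE negb_or => /andP [/andP [Hvu Hvbl] /andP [Hvim Hvc]].
rewrite img_upd // in_setU1 negb_or Hvu Hvim /=.
apply/bigcupP => [[e]]; rewrite !inE => /orP [/orP [/eqP Ee|He]|/orP [/eqP Ee|He]].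
- rewrite Ee !inE => /orP [/eqP Ev|/eqP Ev]; last by move: Hvu; rewrite Ev eqxx.
  by move: Hvim; rewrite Ev (imset_f phi Hpx).
- by move=> Hve; move: Hvc => /bigcupP; apply; exists e; rewrite // inE He.
- by rewrite Ee (negbTE Hvbl).
- by move=> Hve; move: Hvc => /bigcupP; apply; exists e; rewrite // inE He orbT.
Qed.

Lemma fresh_card (E : {set V}) phi (s : position N) x u bl (X : {set 'I_N}) :
  x \notin E -> par x \in E ->
  Fresh E phi s :&: (u |: bl) \subset X ->
  #|Fresh E phi s| - #|X| <=
  #|Fresh (x |: E) (upd phi x u) ([set phi (par x); u] |: s.1, bl |: s.2)|.
Proof.
move=> Hx Hpx HX.
have H1 : #|Fresh E phi s :\: (u |: bl)| <=
  #|Fresh (x |: E) (upd phi x u) ([set phi (par x); u] |: s.1, bl |: s.2)|.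
  by apply: subset_leq_card; exact: fresh_step.
have H2 : #|Fresh E phi s :&: (u |: bl)| <= #|X| by apply: subset_leq_card.
have := cardsID (u |: bl) (Fresh E phi s).
lia.
Qed.

Lemma fresh_notin_img (E : {set V}) phi (s : position N) v :
  v \in Fresh E phi s -> v \notin phi @: E.
Proof. by rewrite inE => /andP []. Qed.

Lemma fresh_notin_edge (E : {set V}) phi (s : position N) v e :
  v \in Fresh E phi s -> e \in s.1 :|: s.2 -> v \notin e.
Proof.
rewrite inE => /andP [_ Hc] He; apply/negP => Hv.
by move: Hc => /bigcupP; apply; exists e.
Qed.

Lemma free_pair (E : {set V}) phi (s : position N) p u :
  Inv E phi s -> p \in E -> u \notin phi @: E -> [set phi p; u] \notin s.2 ->
  free_edge s [set phi p; u].
Proof.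
move=> HI Hp Hu Hn; rewrite /free_edge Hn andbT cards2.
have Hpu : phi p != u by apply: contraNneq Hu => <-; exact: imset_f.
rewrite Hpu /= (inv_red HI); apply/imsetP => [[y]]; rewrite inE => /andP [HyR Hy] Ee.
have : u \in [set phi y; phi (par y)] by rewrite -Ee !inE eqxx orbT.
rewrite !inE => /orP [] /eqP Eu; move: Hu; rewrite Eu imset_f //.
exact: (inv_par HI).
Qed.

Lemma M1_out (E : {set V}) phi (s : position N) x u1 u2 :
  Inv E phi s -> x \notin E -> par x \in E ->
  u1 \in Fresh E phi s -> u2 \in Fresh E phi s -> u1 != u2 ->
  Inv (x |: E) (upd phi x u1) ([set phi (par x); u1] |: s.1, [set phi (par x); u2] |: s.2) /\
  #|Fresh E phi s| - 2 <=
  #|Fresh (x |: E) (upd phi x u1) ([set phi (par x); u1] |: s.1, [set phi (par x); u2] |: s.2)|.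
Proof.
move=> HI Hx Hpx Hu1 Hu2 H12.
have Hpxx : par x != x := in_Ene Hpx Hx.
have HxR : x \notin R by apply: contra Hx => /(subsetP (inv_R HI)).
split.
  apply: embed => //.
  - exact: fresh_notin_img Hu1.
  - move=> e He Hue; exfalso; move: Hue; apply/negP.
    by apply: fresh_notin_edge Hu1 _; rewrite inE He orbT.
  - right; exists x, u2; split; rewrite ?in_setU1 ?eqxx //.
      rewrite img_upd // in_setU1 negb_or eq_sym H12 /=.
      exact: fresh_notin_img Hu2.
    by rewrite upd_in.
  - move=> w Hw; rewrite !inE => /orP [/eqP Ew|/eqP Ew].
      by move: Hw; rewrite Ew img_upd // in_setU1 imset_f ?orbT.
    subst w => e He; apply: fresh_notin_edge Hu2 _; by rewrite inE He orbT.
have := @fresh_card E phi s x u1 [set phi (par x); u2] [set u1; u2] Hx Hpx; rewrite cards2 H12; apply.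
apply/subsetP => v; rewrite !inE => /andP [Hv /orP [->//|/orP [/eqP Ev|->]]]; rewrite ?orbT //.
by move: Hv; rewrite Ev imset_f.
Qed.

Lemma M2_out (E : {set V}) phi (s : position N) x y u :
  Inv E phi s -> x \notin E -> par x \in E -> y \notin E -> par y \in E ->
  part F x != part F y -> u \in Fresh E phi s ->
  Inv (x |: E) (upd phi x u) ([set phi (par x); u] |: s.1, [set phi (par y); u] |: s.2) /\
  #|Fresh E phi s| - 1 <=
  #|Fresh (x |: E) (upd phi x u) ([set phi (par x); u] |: s.1, [set phi (par y); u] |: s.2)|.
Proof.
move=> HI Hx Hpx Hy Hpy Hxy Hu.
have Hpyx : par y != x := in_Ene Hpy Hx.
have HxR : x \notin R by apply: contra Hx => /(subsetP (inv_R HI)).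
have HyR : y \notin R by apply: contra Hy => /(subsetP (inv_R HI)).
split.
  apply: embed => //.
  - exact: fresh_notin_img Hu.
  - move=> e He Hue; exfalso; move: Hue; apply/negP.
    by apply: fresh_notin_edge Hu _; rewrite inE He orbT.
  - left; exists (par y), x; split; rewrite ?in_setU1 ?eqxx ?Hpy ?orbT //.
      by rewrite par_part // eq_sym.
    by rewrite HxR orbT. by rewrite upd_in // upd_x.
  - move=> w Hw; rewrite !inE => /orP [/eqP Ew|/eqP Ew].
      by move: Hw; rewrite Ew img_upd // in_setU1 imset_f ?orbT.
    by move: Hw; rewrite Ew img_upd // in_setU1 eqxx.
have := @fresh_card E phi s x u [set phi (par y); u] [set u] Hx Hpx; rewrite cards1; apply.
apply/subsetP => v; rewrite !inE => /andP [Hv /orP [->//|/orP [/eqP Ev|->]]] //.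
by move: Hv; rewrite Ev imset_f.
Qed.

Lemma one_edge (E : {set V}) phi (s : position N) w e1 e2 :
  Inv E phi s -> w \notin phi @: E -> e1 \in s.2 -> w \in e1 -> e2 \in s.2 -> w \in e2 ->
  e1 = e2.
Proof.
move=> HI Hw H1 Hw1 H2 Hw2; have := inv_one HI Hw => /card_le1_eqP; apply;
  by rewrite inE ?H1 ?H2 ?Hw1 ?Hw2.
Qed.

Lemma M3_out (E : {set V}) phi (s : position N) y z w z0 :
  Inv E phi s -> y \notin E -> par y \in E -> z \notin E -> par z \in E ->
  part F y != part F z -> w \notin phi @: E -> z0 \in E -> [set phi z0; w] \in s.2 ->
  part F z0 != part F y ->
  Inv (y |: E) (upd phi y w) ([set phi (par y); w] |: s.1, [set phi (par z); w] |: s.2) /\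
  #|Fresh E phi s| <=
  #|Fresh (y |: E) (upd phi y w) ([set phi (par y); w] |: s.1, [set phi (par z); w] |: s.2)|.
Proof.
move=> HI Hy Hpy Hz Hpz Hyz Hw Hz0 He0 Hz0y.
have Hpzy : par z != y := in_Ene Hpz Hy.
have HyR : y \notin R by apply: contra Hy => /(subsetP (inv_R HI)).
have HzR : z \notin R by apply: contra Hz => /(subsetP (inv_R HI)).
split.
  apply: embed => //.
  - move=> e He Hwe; exists z0 => //; split => //.
    by apply: (one_edge HI Hw He Hwe He0); rewrite !inE eqxx orbT.
  - left; exists (par z), y; split; rewrite ?in_setU1 ?eqxx ?Hpz ?orbT //.
      by rewrite par_part // eq_sym.
    by rewrite HyR orbT.
    by rewrite upd_in // upd_x.
  - move=> w' Hw'; rewrite !inE => /orP [/eqP Ew|/eqP Ew].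
      by move: Hw'; rewrite Ew img_upd // in_setU1 imset_f ?orbT.
    by move: Hw'; rewrite Ew img_upd // in_setU1 eqxx.
have := @fresh_card E phi s y w [set phi (par z); w] set0 Hy Hpy; rewrite cards0 subn0; apply.
apply/subsetP => v; rewrite !inE => /andP [Hv /orP [/eqP Ev|/orP [/eqP Ev|/eqP Ev]]].
- move: Hv; rewrite Ev => /andP [_] /bigcupP []; exists [set phi z0; w].
    by rewrite inE He0 orbT.
  by rewrite !inE eqxx orbT.
- by move: Hv; rewrite Ev imset_f.
- move: Hv; rewrite Ev => /andP [_] /bigcupP []; exists [set phi z0; w].
    by rewrite inE He0 orbT.
  by rewrite !inE eqxx orbT.
Qed.

Lemma frontier (E : {set V}) :
  R \subset E -> (forall x, x \in E -> x \notin R -> par x \in E) ->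
  forall x, x \notin E -> exists y, [/\ y \notin E, part F y = part F x & par y \in E].
Proof.
move=> IR Ipar x; move: {2}(dist x) (leqnn (dist x)) => n; elim: n x => [|n IH] x Hd Hx.
  have : x \in R by rewrite -dist0 -leqn0.
  by move/(subsetP IR); rewrite (negbTE Hx).
have HxR : x \notin R by apply: contra Hx => /(subsetP IR).
case: (boolP (par x \in E)) => Hp; first by exists x.
have [|y [Hy Hyp Hpy]] := IH (par x) _ Hp.
  by have := par_lt HxR; lia.
by exists y; rewrite Hyp par_part.
Qed.

Lemma prof_sum (E : {set V}) : \sum_i prof E i = #|~: E|.
Proof.
rewrite -sum1_card (partition_big (part F) predT) //=.
apply: eq_bigr => i _; rewrite /prof -sum1_card.
by apply: eq_bigl => x; rewrite !inE.
Qed.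

Lemma prof_add (E : {set V}) x : x \notin E -> prof (x |: E) =1 decr (prof E) (part F x).
Proof.
move=> Hx i; rewrite /prof /decr.
set S := [set y | (y \notin E) && (part F y == i)].
have -> : [set y | (y \notin x |: E) && (part F y == i)] = S :\ x.
  apply/setP => y; rewrite !inE negb_or.
  by case: (eqVneq y x) => [->|] //=; rewrite Hx.
have := cardsD1 x S; rewrite inE Hx /= => ->.
by rewrite [i == _]eq_sym; case: (part F x == i) => /=; lia.
Qed.

Lemma notin_imgT (phi : V -> 'I_N) w z : w \notin phi @: [set: V] -> (w == phi z) = false.
Proof. move=> Hw; apply/negbTE/eqP => Ew; by move: Hw; rewrite Ew imset_f ?inE. Qed.

Lemma final phi (s : position N) : Inv [set: V] phi s -> good_copy F rho s.
Proof.
move=> HI; have inj : injective phi by move=> x y; apply: (inv_inj HI); rewrite inE.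
have Mi : forall (D : {set V}) x, (phi x \in phi @: D) = (x \in D).
  by move=> D x; rewrite mem_imset.
exists phi; split.
- split => // x y Hxy; rewrite (inv_red HI); apply/imsetP.
  case/orP: (par_edge Hxy) => /andP [Hn /eqP Ep].
    by exists x; rewrite ?inE ?Hn // Ep.
  by exists y; rewrite ?inE ?Hn // Ep setUC.
- split; first exact: (inv_rho HI).
  move=> x y Hx Hy Hxy; rewrite inE negb_or; apply/andP; split.
    rewrite (inv_red HI); apply/imsetP => [[c]]; rewrite !inE => /andP [HcR _] Ee.
    have : phi c \in [set phi x; phi y] by rewrite Ee !inE eqxx.
    by rewrite !inE => /orP [] /eqP /inj Ec; move: HcR; rewrite Ec ?Hx ?Hy.
  apply/negP => He; case: (inv_blue HI He) => [[u [v [_ _ _ Huv Ee]]]|[c [w [_ _ Hw Ee]]]].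
    have : phi u \in [set phi x; phi y] by rewrite Ee !inE eqxx.
    have : phi v \in [set phi x; phi y] by rewrite Ee !inE eqxx orbT.
    rewrite !inE => /orP [] /eqP /inj Ev /orP [] /eqP /inj Eu;
      by move: Huv; rewrite Eu Ev ?Hx ?Hy.
  have : w \in [set phi x; phi y] by rewrite Ee !inE eqxx orbT.
  by rewrite !inE !(notin_imgT _ Hw).
- split.
    move=> i e He; apply/negP => Hsub.
    case: (inv_blue HI He) => [[u [v [_ _ Huv _ Ee]]]|[c [w [_ _ Hw Ee]]]].
      have Hu : phi u \in phi @: vset F i by apply: (subsetP Hsub); rewrite Ee !inE eqxx.
      have Hv : phi v \in phi @: vset F i by apply: (subsetP Hsub); rewrite Ee !inE eqxx orbT.
      move: Hu Hv; rewrite !Mi !inE => /eqP Hu /eqP Hv; by rewrite Hu Hv eqxx in Huv.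
    have : w \in phi @: vset F i by apply: (subsetP Hsub); rewrite Ee !inE eqxx orbT.
    case/imsetP => z _ Ez; by move: Hw; rewrite Ez imset_f ?inE.
  move=> i e He Hsub; rewrite (inv_red HI) in He; case/imsetP: He => c; rewrite !inE.
  move=> /andP [HcR _] Ee; exists c, (par c); split => //; first exact: par_adj.
  have : phi c \in phi @: vset F i by apply: (subsetP Hsub); rewrite Ee !inE eqxx.
  by rewrite Mi inE => /eqP.
- move=> e; rewrite inE => /orP [Hr|Hb]; apply/negP => Hd.
    rewrite (inv_red HI) in Hr; case/imsetP: Hr => c _ Ee.
    have Hz : phi c \in e by rewrite Ee !inE eqxx.
    by move: (disjointFr Hd Hz); rewrite imset_f ?inE.
  case: (inv_blue HI Hb) => [[u [v [_ _ _ _ Ee]]]|[c [w [_ _ Hw Ee]]]].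
    have Hz : phi u \in e by rewrite Ee !inE eqxx.
    by move: (disjointFr Hd Hz); rewrite imset_f ?inE.
  have Hz : phi (par c) \in e by rewrite Ee !inE eqxx.
  by move: (disjointFr Hd Hz); rewrite imset_f ?inE.
- move=> w Hw.
  have NR : forall e, e \in s.1 -> w \notin e.
    move=> e; rewrite (inv_red HI) => /imsetP [c _ ->].
    by rewrite !inE !(notin_imgT _ Hw).
  split.
    have -> : [set e in s.1 :|: s.2 | w \in e] = [set e in s.2 | w \in e].
      apply/setP => e; rewrite !inE; case: (boolP (e \in s.1)) => He //=.
      by rewrite (negbTE (NR _ He)) andbF.
    by apply: (inv_one HI).
  move=> e u; rewrite inE => /orP [Hr|Hb] Hwe Hue Huw.
    by move: Hwe; rewrite (negbTE (NR _ Hr)).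
  case: (inv_blue HI Hb) => [[a [b [_ _ _ _ Ee]]]|[c [w' [_ HcR Hw' Ee]]]].
    by move: Hwe; rewrite Ee !inE !(notin_imgT _ Hw).
  move: Hwe Hue; rewrite Ee !inE (notin_imgT _ Hw) /= => /eqP Ew /orP [/eqP Eu|/eqP Eu].
    by rewrite Eu Mi; exact: par_not_leaf.
  by move: Huw; rewrite Eu Ew eqxx.
Qed.

Local Notation P := (good_copy F rho).

Lemma wf_step k (s : position N) e1 e2 : free_edge s e1 -> free_edge s e2 -> e1 != e2 ->
  waiter_forces P k (e1 |: s.1, e2 |: s.2) -> waiter_forces P k (e2 |: s.1, e1 |: s.2) ->
  waiter_forces P k.+1 s.
Proof. by move=> *; right; exists e1, e2; split. Qed.

Lemma card_compl_add (E : {set V}) x : x \notin E -> #|~: (x |: E)| = (#|~: E|).-1.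
Proof.
move=> Hx; rewrite (cardsD1 x (~: E)) inE Hx add1n /=.
by apply: eq_card => y; rewrite !inE negb_or andbC.
Qed.

Lemma pair_eq (a b w : 'I_N) : a != w -> b != w -> [set a; w] = [set b; w] -> a = b.
Proof.
move=> Ha Hb E1; have : a \in [set b; w] by rewrite -E1 !inE eqxx.
by rewrite !inE (negbTE Ha) orbF => /eqP.
Qed.

Lemma Good_step (E : {set V}) x b b' (r : 'I_(ell F) -> nat) :
  x \notin E -> r =1 prof E -> Good b (decr r (part F x)) -> b <= b' ->
  Good b' (prof (x |: E)).
Proof.
move=> Hx Er HG Hb; apply: Good_mono Hb _; apply: Good_ext HG => j.
by rewrite prof_add // /decr Er.
Qed.

Definition IHk k := forall (E : {set V}) phi (s : position N), #|~: E| = k -> Inv E phi s ->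
  Good #|Fresh E phi s| (prof E) -> waiter_forces P k s.

Lemma img_ne (E : {set V}) (phi : V -> 'I_N) p u : p \in E -> u \notin phi @: E -> phi p != u.
Proof. by move=> Hp Hu; apply: contraNneq Hu => <-; exact: imset_f. Qed.

Lemma do_M2 k (E : {set V}) phi (s : position N) x y :
  IHk k -> #|~: E| = k.+1 -> Inv E phi s -> x \notin E -> par x \in E ->
  y \notin E -> par y \in E -> part F x != part F y ->
  Good (#|Fresh E phi s| - 1) (decr (prof E) (part F x)) ->
  Good (#|Fresh E phi s| - 1) (decr (prof E) (part F y)) ->
  0 < #|Fresh E phi s| -> waiter_forces P k.+1 s.
Proof.
move=> IH Hk HI Hx Hpx Hy Hpy Hxy G1 G2 /card_gt0P [u Hu].
have Hui := fresh_notin_img Hu.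
have Hnot : forall p, [set phi p; u] \notin s.2.
  move=> p; apply/negP => He.
  have H1 : [set phi p; u] \in s.1 :|: s.2 by rewrite inE He orbT.
  by have := fresh_notin_edge Hu H1; rewrite !inE eqxx orbT.
apply: (@wf_step _ _ [set phi (par x); u] [set phi (par y); u]).
- exact: free_pair HI Hpx Hui (Hnot _).
- exact: free_pair HI Hpy Hui (Hnot _).
- apply/negP => /eqP /(pair_eq (img_ne Hpx Hui) (img_ne Hpy Hui)) /(inv_inj HI Hpx Hpy) Ep.
  have HxR : x \notin R by apply: contra Hx => /(subsetP (inv_R HI)).
  have HyR : y \notin R by apply: contra Hy => /(subsetP (inv_R HI)).
  by move: Hxy; rewrite -(par_part HxR) -(par_part HyR) Ep eqxx.
- have [HI' Hc] := M2_out HI Hx Hpx Hy Hpy Hxy Hu.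
  apply: IH HI' _; first by rewrite card_compl_add // Hk.
  exact: Good_step Hx (fun _ => erefl) G1 Hc.
- rewrite eq_sym in Hxy; have [HI' Hc] := M2_out HI Hy Hpy Hx Hpx Hxy Hu.
  apply: IH HI' _; first by rewrite card_compl_add // Hk.
  exact: Good_step Hy (fun _ => erefl) G2 Hc.
Qed.

Lemma do_M1 k (E : {set V}) phi (s : position N) x :
  IHk k -> #|~: E| = k.+1 -> Inv E phi s -> x \notin E -> par x \in E ->
  Good (#|Fresh E phi s| - 2) (decr (prof E) (part F x)) ->
  1 < #|Fresh E phi s| -> waiter_forces P k.+1 s.
Proof.
move=> IH Hk HI Hx Hpx G1 /card_gt1P [u1 [u2 [Hu1 Hu2 H12]]].
have Hnot : forall p u, u \in Fresh E phi s -> [set phi p; u] \notin s.2.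
  move=> p u Hu; apply/negP => He.
  have H1 : [set phi p; u] \in s.1 :|: s.2 by rewrite inE He orbT.
  by have := fresh_notin_edge Hu H1; rewrite !inE eqxx orbT.
apply: (@wf_step _ _ [set phi (par x); u1] [set phi (par x); u2]).
- exact: free_pair HI Hpx (fresh_notin_img Hu1) (Hnot _ _ Hu1).
- exact: free_pair HI Hpx (fresh_notin_img Hu2) (Hnot _ _ Hu2).
- apply/negP => /eqP E1; have : u1 \in [set phi (par x); u2] by rewrite -E1 !inE eqxx orbT.
  rewrite !inE (negbTE H12) orbF eq_sym => /eqP Eu.
  by move: (fresh_notin_img Hu1); rewrite -Eu imset_f.
- have [HI' Hc] := M1_out HI Hx Hpx Hu1 Hu2 H12.
  apply: IH HI' _; first by rewrite card_compl_add // Hk.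
  exact: Good_step Hx (fun _ => erefl) G1 Hc.
- rewrite eq_sym in H12; have [HI' Hc] := M1_out HI Hx Hpx Hu2 Hu1 H12.
  apply: IH HI' _; first by rewrite card_compl_add // Hk.
  exact: Good_step Hx (fun _ => erefl) G1 Hc.
Qed.

Lemma do_M1M3 k (E : {set V}) phi (s : position N) x y z :
  IHk k -> #|~: E| = k.+2 -> Inv E phi s -> x \notin E -> par x \in E ->
  y \notin E -> par y \in E -> z \notin E -> par z \in E ->
  part F x != part F y -> part F x != part F z -> part F y != part F z ->
  Good (#|Fresh E phi s| - 2) (decr (decr (prof E) (part F x)) (part F y)) ->
  Good (#|Fresh E phi s| - 2) (decr (decr (prof E) (part F x)) (part F z)) ->
  1 < #|Fresh E phi s| -> waiter_forces P k.+2 s.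
Proof.
move=> IH Hk HI Hx Hpx Hy Hpy Hz Hpz Hxy Hxz Hyz Gy Gz /card_gt1P [u1 [u2 [Hu1 Hu2 H12]]].
have Hnot : forall p u, u \in Fresh E phi s -> [set phi p; u] \notin s.2.
  move=> p u Hu; apply/negP => He.
  have H1 : [set phi p; u] \in s.1 :|: s.2 by rewrite inE He orbT.
  by have := fresh_notin_edge Hu H1; rewrite !inE eqxx orbT.
have HxR : x \notin R by apply: contra Hx => /(subsetP (inv_R HI)).
have HyR : y \notin R by apply: contra Hy => /(subsetP (inv_R HI)).
have HzR : z \notin R by apply: contra Hz => /(subsetP (inv_R HI)).
have Hpxx : par x != x := in_Ene Hpx Hx.
have Hyx : y != x by apply: contraNneq Hxy => ->.
have Hzx : z != x by apply: contraNneq Hxz => ->.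
have Round2 : forall ua ub, ua \in Fresh E phi s -> ub \in Fresh E phi s -> ua != ub ->
    waiter_forces P k.+1 ([set phi (par x); ua] |: s.1, [set phi (par x); ub] |: s.2).
  move=> ua ub Hua Hub Hab.
  have [HI1 Hc1] := M1_out HI Hx Hpx Hua Hub Hab.
  set E1 := x |: E in HI1 Hc1 *; set phi1 := upd phi x ua in HI1 Hc1 *.
  set s1 := (_, _) in HI1 Hc1 *.
  have Hy1 : y \notin E1 by rewrite in_setU1 negb_or Hyx Hy.
  have Hz1 : z \notin E1 by rewrite in_setU1 negb_or Hzx Hz.
  have Hpy1 : par y \in E1 by rewrite in_setU1 Hpy orbT.
  have Hpz1 : par z \in E1 by rewrite in_setU1 Hpz orbT.
  have Hpx1 : par x \in E1 by rewrite in_setU1 Hpx orbT.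
  have Hw : ub \notin phi1 @: E1.
    by rewrite img_upd // in_setU1 negb_or eq_sym Hab (fresh_notin_img Hub).
  have Ephi1 : phi1 (par x) = phi (par x) by rewrite /phi1 upd_in.
  have He0 : [set phi1 (par x); ub] \in s1.2 by rewrite Ephi1 /= in_setU1 eqxx.
  have Hp0y : part F (par x) != part F y by rewrite par_part.
  have Hp0z : part F (par x) != part F z by rewrite par_part.
  have Hnot1 : forall q, q \in E1 -> part F q != part F (par x) -> [set phi1 q; ub] \notin s1.2.
    move=> q Hq Hqp; apply/negP => Hin.
    have Hq1 : ub \in [set phi1 q; ub] by rewrite !inE eqxx orbT.
    have Hq2 : ub \in [set phi1 (par x); ub] by rewrite !inE eqxx orbT.
    move: (one_edge HI1 Hw Hin Hq1 He0 Hq2).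
    move/(pair_eq (img_ne Hq Hw) (img_ne Hpx1 Hw)) => /(inv_inj HI1 Hq Hpx1) Eq.
    by move: Hqp; rewrite Eq eqxx.
  apply: (@wf_step _ _ [set phi1 (par y); ub] [set phi1 (par z); ub]).
  - apply: free_pair HI1 Hpy1 Hw (Hnot1 _ Hpy1 _); by rewrite par_part // eq_sym.
  - apply: free_pair HI1 Hpz1 Hw (Hnot1 _ Hpz1 _); by rewrite par_part // eq_sym.
  - apply/negP => /eqP /(pair_eq (img_ne Hpy1 Hw) (img_ne Hpz1 Hw)) /(inv_inj HI1 Hpy1 Hpz1) Ep.
    by move: Hyz; rewrite -(par_part HyR) -(par_part HzR) Ep eqxx.
  - have [HI2 Hc2] := M3_out HI1 Hy1 Hpy1 Hz1 Hpz1 Hyz Hw Hpx1 He0 Hp0y.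
    apply: IH HI2 _; first by rewrite !card_compl_add // Hk.
    apply: (Good_step (r := decr (prof E) (part F x)) Hy1 _ Gy).
      by move=> j; rewrite prof_add.
    by apply: leq_trans Hc2; exact: Hc1.
  - rewrite eq_sym in Hyz.
    have [HI2 Hc2] := M3_out HI1 Hz1 Hpz1 Hy1 Hpy1 Hyz Hw Hpx1 He0 Hp0z.
    apply: IH HI2 _; first by rewrite !card_compl_add // Hk.
    apply: (Good_step (r := decr (prof E) (part F x)) Hz1 _ Gz).
      by move=> j; rewrite prof_add.
    by apply: leq_trans Hc2; exact: Hc1.
apply: (@wf_step _ _ [set phi (par x); u1] [set phi (par x); u2]).
- exact: free_pair HI Hpx (fresh_notin_img Hu1) (Hnot _ _ Hu1).
- exact: free_pair HI Hpx (fresh_notin_img Hu2) (Hnot _ _ Hu2).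
- apply/negP => /eqP E1; have : u1 \in [set phi (par x); u2] by rewrite -E1 !inE eqxx orbT.
  rewrite !inE (negbTE H12) orbF eq_sym => /eqP Eu.
  by move: (fresh_notin_img Hu1); rewrite -Eu imset_f.
- exact: Round2.
- by apply: Round2; rewrite // eq_sym.
Qed.

Lemma front_of (E : {set V}) phi (s : position N) i :
  Inv E phi s -> 0 < prof E i -> exists x, [/\ x \notin E, part F x = i & par x \in E].
Proof.
move=> HI /card_gt0P [x0]; rewrite inE => /andP [Hx0 /eqP <-].
exact: frontier (inv_R HI) (inv_par HI) x0 Hx0.
Qed.

Lemma main k : IHk k.
Proof.
elim/ltn_ind: k => k IH E phi s Hk HI HG.
case: k IH Hk => [|k] IH Hk.
  left; have ET : E = [set: V].
    apply/setP => x; rewrite inE; apply/negPn/negP => Hx.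
    by have := cards0_eq Hk => /setP /(_ x); rewrite !inE Hx.
  by subst E; exact: final HI.
have IH1 : IHk k by move=> E' phi' s'; apply: IH.
have [x0 Hx0] : exists x0, x0 \in ~: E by apply/card_gt0P; rewrite Hk.
set r := prof E in HG.
have Hsum : \sum_j r j = k.+1 by rewrite /r prof_sum.
case: (@arg_maxnP _ (part F x0) xpredT r isT) => i _ Hmax.
have Hmax' : forall j, r j <= r i by move=> j; apply: Hmax.
have Hr0 : 0 < r (part F x0).
  by apply/card_gt0P; exists x0; rewrite inE; rewrite inE in Hx0; rewrite Hx0 eqxx.
have Hi : 0 < r i by apply: leq_trans Hr0 (Hmax' _).
have [xi [Hxi Epxi Hpxi]] := front_of HI Hi.
case: (pickP (fun j => (j != i) && (r j == r i))) => [j /andP [Hji /eqP Eji]|Hnt].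
  have Hj : 0 < r j by rewrite Eji.
  have [xj [Hxj Epxj Hpxj]] := front_of HI Hj.
  have Hij : i != j by rewrite eq_sym.
  have [Hb G1] := good_M2 HG Hij Hi Hj (fun x _ _ => Hmax' x) (fun x _ _ => or_intror (Hmax' j)).
  have H1 : forall x, x != j -> x != i -> r x <= r j by move=> x _ _; rewrite Eji.
  have H2 : forall x, x != j -> x != i -> r x < r j \/ r i <= r j.
    by move=> x _ _; right; rewrite Eji.
  have [_ G2] := good_M2 HG Hji Hj Hi H1 H2.
  apply: (do_M2 IH1 Hk HI Hxi Hpxi Hxj Hpxj); rewrite ?Epxi ?Epxj //.
have Hstr : forall x, x != i -> r x < r i.
  move=> x Hx; have := Hnt x; rewrite /= Hx /= => /negbT Hne.
  by rewrite ltn_neqAle Hne Hmax'.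
case: (pickP (fun j => (j != i) && (0 < r j))) => [j /andP [Hji Hj]|Hno].
  have [xj [Hxj Epxj Hpxj]] := front_of HI Hj.
  have Hij : i != j by rewrite eq_sym.
  case: (pickP (fun c => [&& c != i, c != j & 0 < r c])) => [c /and3P [Hci Hcj Hc]|Hno2].
    have [xc [Hxc Epxc Hpxc]] := front_of HI Hc.
    have Hjc : j != c by rewrite eq_sym.
    have Hic : i != c by rewrite eq_sym.
    have [Hb Gj] := good_M1M3 HG Hji Hj Hstr.
    have [_ Gc] := good_M1M3 HG Hci Hc Hstr.
    case: k IH IH1 Hk Hsum => [|k] IH IH1 Hk Hsum.
      have H := sum2 r Hij; rewrite Hsum in H.
      by move: (r i) (r j) Hi Hj H => a b; lia.
    have IH2 : IHk k.
      by move=> E' phi' s'; apply: IH; exact: (leq_trans (ltnSn k) (leqnSn _)).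
    apply: (do_M1M3 IH2 Hk HI Hxi Hpxi Hxj Hpxj Hxc Hpxc); rewrite ?Epxi ?Epxj ?Epxc;
      [exact: Hij | exact: Hic | exact: Hjc | exact: Gj | exact: Gc | exact: Hb].
  have Hz : forall x, x != i -> x != j -> r x = 0.
    move=> x H1 H2; have := Hno2 x; rewrite /= H1 H2 /=.
    by move/negbT; rewrite -leqNgt leqn0 => /eqP.
  have H1 : forall x, x != i -> x != j -> r x <= r i by move=> x _ _; exact: Hmax'.
  have H2 : forall x, x != i -> x != j -> r x < r i \/ r j <= r i.
    by move=> x Hx _; left; exact: Hstr.
  have [Hb G1] := good_M2 HG Hij Hi Hj H1 H2.
  have H1' : forall x, x != j -> x != i -> r x <= r j by move=> x A1 A2; rewrite Hz.
  have H2' : forall x, x != j -> x != i -> r x < r j \/ r i <= r j.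
    by move=> x A1 A2; left; rewrite Hz.
  have [_ G2] := good_M2 HG Hji Hj Hi H1' H2'.
  apply: (do_M2 IH1 Hk HI Hxi Hpxi Hxj Hpxj); rewrite ?Epxi ?Epxj;
    [exact: Hij | exact: G1 | exact: G2 | exact: Hb].
have Hz : forall x, x != i -> r x = 0.
  move=> x H1; have := Hno x; rewrite /= H1 /=.
  by move/negbT; rewrite -leqNgt leqn0 => /eqP.
have [Hb G1] := good_M1 HG Hi Hz.
apply: (do_M1 IH1 Hk HI Hxi Hpxi); rewrite ?Epxi; [exact: G1 | exact: Hb].
Qed.

End Forest.

Lemma sum1 n (r : 'I_n -> nat) p : r p <= \sum_x r x.
Proof. by have := @sum_sub n r [:: p]; rewrite big_cons big_nil addn0; apply. Qed.

Lemma ei_sub (V W : finType) (F : rft V) (G : rft W) f (Hell : ell F <= ell G) (p : 'I_(ell F)) :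
  injective f ->
  (forall x, nat_of_ord (part G (f x)) = nat_of_ord (part F x)) ->
  (forall x y, adj F x y -> adj G (f x) (f y)) ->
  e_i F p <= e_i G (widen_ord Hell p).
Proof.
move=> Hinj Hp Ha; rewrite /e_i.
rewrite -(card_imset _ (imset_inj Hinj)).
apply: subset_leq_card; apply/subsetP => e' /imsetP [e]; rewrite inE => /andP [He Hs] ->.
rewrite inE; apply/andP; split.
  move: He; rewrite inE => /existsP [x /existsP [y /andP [Hxy /eqP ->]]].
  rewrite inE; apply/existsP; exists (f x); apply/existsP; exists (f y).
  by rewrite Ha //= imsetU1 imset_set1.
apply/subsetP => z /imsetP [x Hx ->]; rewrite inE.
move/subsetP: Hs => /(_ x Hx); rewrite inE => /eqP Epx.
by apply/eqP/val_inj; rewrite /= Hp Epx.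
Qed.

Lemma suit_bound (V : finType) (F : rft V) m (r : 'I_(ell F) -> nat) :
  m_suitable m F -> (forall p, r p = e_i F p) -> \sum_p r p < m ->
  (forall p q, p != q -> 2 * r p + r q <= m) /\ (forall p, 2 * r p <= m).
Proof.
move=> [W [G [f [HG Hsuit HeG [Hinj Hell Hp Ha _]]]]] Er Hs.
pose g := fun p : 'I_(ell F) => widen_ord Hell p.
have Hg : forall p, r p <= e_i G (g p).
  by move=> p; rewrite Er; apply: (ei_sub Hell p Hinj Hp Ha).
have Ha_le : forall j, e_i G j <= aF G by move=> j; exact: leq_bigmax.
have ginj : injective g by move=> a b /(congr1 val) /= /val_inj.
have Hk1 : forall p : 'I_(ell F), 1 <= kF G.
  move=> p; have Hc : 0 < #|'I_(ell G)| by rewrite card_ord; exact: (leq_ltn_trans (leq0n _) (ltn_ord (g p))).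
  have [i0 Ei0] := eq_bigmax (fun i => e_i G i) Hc.
  by apply/card_gt0P; exists i0; rewrite inE /aF Ei0.
have Hk2 : forall p q, p != q -> e_i G (g p) = aF G -> e_i G (g q) = aF G -> 2 <= kF G.
  move=> p q Hpq E1 E2.
  have Hne : g p != g q by apply/eqP => /ginj Epq; rewrite Epq eqxx in Hpq.
  have := cards2 (g p) (g q); rewrite Hne => <-; rewrite /kF; apply: subset_leq_card; apply/subsetP => z.
  by rewrite !inE => /orP [] /eqP ->; rewrite ?E1 ?E2 eqxx.
have Hsum2 : forall p q, p != q -> r p + r q < m by move=> p q H; exact: leq_ltn_trans (sum2 r H) Hs.
have Hsum1 : forall p, r p < m by move=> p; exact: leq_ltn_trans (sum1 r p) Hs.
rewrite /suitable HeG in Hsuit.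
case: Hsuit => [H3|[Ha1 _]].
  split.
    move=> p q Hpq; have := Hg p; have := Hg q; have := Ha_le (g p); have := Ha_le (g q).
    have := Hk1 p; have := Hk2 p q Hpq.
    case: (eqVneq (e_i G (g p)) (aF G)) => [E1|N1]; case: (eqVneq (e_i G (g q)) (aF G)) => [E2|N2].
    - move=> /(_ E1 E2); lia.
    - move=> _; move: N2 => /eqP; lia.
    - move=> _; move: N1 => /eqP; lia.
    - move=> _; move: N1 => /eqP; lia.
  move=> p; have := Hg p; have := Ha_le (g p); have := Hk1 p; lia.
split.
  move=> p q Hpq; have := Hg p; have := Hg q; have := Ha_le (g p); have := Ha_le (g q).
  have := Hsum2 p q Hpq; rewrite Ha1; lia.
move=> p; have := Hg p; have := Ha_le (g p); have := Hsum1 p; rewrite Ha1; lia.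
Qed.

Unset Implicit Arguments.

Theorem lemma3p18 (m : nat) (V : finType) (F : rft V) :
  is_rft F -> m_suitable m F -> eF F < m ->
  forall rho : V -> 'I_(m + vF V - eF F),
  {in rroots F &, injective rho} ->
  waiter_forces (good_copy F rho) (eF F) (set0, set0).
Proof.
move=> [[Hsym Hirr] Hpart Hnc Hroot He] Hms Hm rho Hrho.
have HeF := eF_card Hsym Hirr Hnc Hroot.
have HC : #|~: rroots F| = eF F.
  by rewrite HeF; apply: eq_card => x; rewrite !inE.
have HCR := cardsC (rroots F).
have HI : Inv Hroot rho (rroots F) rho (set0, set0).
  split => //=.
  - by move=> x ->.
  - by apply/setP => e; rewrite inE /redset setDv imset0 inE.
  - by move=> e; rewrite inE.
  - move=> w _; rewrite leq_eqVlt ltnS leqn0 cards_eq0; apply/orP; right; apply/eqP/setP => e; by rewrite !inE.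
have HFr : #|Fresh (rroots F) rho (set0, set0)| = m.
  have -> : Fresh (rroots F) rho (set0, set0) = ~: (rho @: rroots F).
    apply/setP => v; rewrite !inE (_ : v \in cover _ = false) ?andbT //.
    apply/negP => /bigcupP [e]; by rewrite !inE.
  have := cardsC (rho @: rroots F); rewrite card_in_imset // card_ord.
  move: HCR HC; rewrite -/(vF V); lia.
apply: (main Hsym Hirr Hnc Hpart HC HI).
rewrite HFr.
have Er : forall p, @prof V F (rroots F) p = e_i F p.
  by move=> p; rewrite (ei_card Hsym Hirr Hnc Hroot Hpart) /prof; apply: eq_card => x; rewrite !inE.
have Hs : \sum_p @prof V F (rroots F) p < m by move: (prof_sum F (rroots F)); rewrite HC => ->.
have [H2 H3] := suit_bound Hms Er Hs.
by split => // _.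
Qed.
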